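(* Let $N\ge K$ be positive integers and let $F,G\in\mathbb C^{N\times K}$ with $\mathrm{rank}(F)=K$. Then the map $h_{0,F,G}:\mathcal H_K^+\to\mathcal H_K^+$ defined in the context is non-decreasing for the Loewner order: if $Z\le Z'$ in $\mathcal H_K^+$ then $h_{0,F,G}(Z)\le h_{0,F,G}(Z')$.
   Context: $\mathcal H_K^+$ is the cone of $K\times K$ Hermitian positive semidefinite matrices, ordered by $A\le B$ iff $B-A\in\mathcal H_K^+$. $\Pi_F^\perp:=I-F(F^*F)^{-1}F^*$. For $Z\in\mathcal H_K^+$ with positive semidefinite square root $Z^{1/2}$, $$h_{0,F,G}(Z):=G^*F(F^*F)^{-1}Z^{1/2}\big(I+Z^{1/2}(F^*F)^{-1}Z^{1/2}\big)^{-1}Z^{1/2}(F^*F)^{-1}F^*G+G^*\Pi_F^\perp G.$$ For invertible $Z$ this equals $G^*(I+FZ^{-1}F^* )^{-1}G$. *)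

(* Defs.v *)
From HB Require Import structures.
From mathcomp Require Import all_boot all_order all_algebra.
From mathcomp Require Import complex.
From mathcomp Require Import boolp reals.
Set Implicit Arguments. Unset Strict Implicit. Unset Printing Implicit Defensive.
Import Order.TTheory GRing.Theory Num.Theory.
Local Open Scope ring_scope.

Definition ctr (C : numClosedFieldType) m n (A : 'M[C]_(m, n)) : 'M[C]_(n, m) :=
  map_mx Num.conj (A^T).

Definition psd (C : numClosedFieldType) n (A : 'M[C]_n) : Prop :=
  ctr A = A /\ forall v : 'rV[C]_n, 0 <= (v *m A *m ctr v) 0 0.

Definition loewner_le (C : numClosedFieldType) n (A B : 'M[C]_n) : Prop :=
  psd (B - A).

(* The positive semidefinite square root Z^{1/2}: the (unique) PSD S with
   S * S = Z when it exists (i.e. when Z is PSD); 0 otherwise. *)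
Definition psd_sqrt (C : numClosedFieldType) n (Z : 'M[C]_n) : 'M[C]_n :=
  match pselect (exists S : 'M[C]_n, psd S /\ S *m S = Z) with
  | left h => proj1_sig (cid h)
  | right _ => 0
  end.

Definition projF_perp (C : numClosedFieldType) N K (F : 'M[C]_(N, K)) : 'M[C]_N :=
  1%:M - F *m invmx (ctr F *m F) *m ctr F.

Definition h0 (C : numClosedFieldType) N K (F G : 'M[C]_(N, K)) (Z : 'M[C]_K)
  : 'M[C]_K :=
  let FFi := invmx (ctr F *m F) in
  let S := psd_sqrt Z in
  ctr G *m F *m FFi *m S *m invmx (1%:M + S *m FFi *m S) *m S *m FFi
    *m ctr F *m G
  + ctr G *m projF_perp F *m G.

(* Main.v *)
Require Import Defs.
From HB Require Import structures.
From mathcomp Require Import all_boot all_order all_algebra.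
From mathcomp Require Import complex sesquilinear spectral.
From mathcomp Require Import boolp reals.
Set Implicit Arguments. Unset Strict Implicit. Unset Printing Implicit Defensive.
Import Order.TTheory GRing.Theory Num.Theory.
Local Open Scope ring_scope.

Section Basics.
Variable C : numClosedFieldType.

Lemma ctr_mul m n p (A : 'M[C]_(m, n)) (B : 'M[C]_(n, p)) :
  ctr (A *m B) = ctr B *m ctr A.
Proof. by rewrite /ctr trmx_mul map_mxM. Qed.

Lemma ctrK m n (A : 'M[C]_(m, n)) : ctr (ctr A) = A.
Proof.
by apply/matrixP => i j; rewrite !mxE conjCK.
Qed.

Lemma ctrD m n (A B : 'M[C]_(m, n)) : ctr (A + B) = ctr A + ctr B.
Proof. by rewrite /ctr linearD /= map_mxD. Qed.

Lemma ctrN m n (A : 'M[C]_(m, n)) : ctr (- A) = - ctr A.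
Proof. by rewrite /ctr linearN /= map_mxN. Qed.

Lemma ctrB m n (A B : 'M[C]_(m, n)) : ctr (A - B) = ctr A - ctr B.
Proof. by rewrite ctrD ctrN. Qed.

Lemma ctr1 n : ctr (1%:M : 'M[C]_n) = 1%:M.
Proof. by rewrite /ctr trmx1 map_mx1. Qed.

Lemma ctr0 m n : ctr (0 : 'M[C]_(m, n)) = 0.
Proof. by rewrite /ctr trmx0 map_mx0. Qed.

Lemma ctr_inv n (A : 'M[C]_n) : ctr (invmx A) = invmx (ctr A).
Proof. by rewrite /ctr trmx_inv map_invmx. Qed.

Lemma dot_ge0 n (u : 'rV[C]_n) : 0 <= (u *m ctr u) 0 0.
Proof.
rewrite mxE; apply: sumr_ge0 => j _; rewrite !mxE; exact: mul_conjC_ge0.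
Qed.

Lemma dot_eq0 n (u : 'rV[C]_n) : (u *m ctr u) 0 0 = 0 -> u = 0.
Proof.
rewrite mxE (eq_bigr (fun j => u 0 j * (u 0 j)^*)); last by move=> j _; rewrite !mxE.
move=> h; apply/rowP => j; rewrite mxE.
have := psumr_eq0P (fun j _ => mul_conjC_ge0 (u 0 j)) h (i := j) isT.
by move/eqP; rewrite mul_conjC_eq0 => /eqP.
Qed.

Definition qf n (M : 'M[C]_n) (v : 'rV[C]_n) := (v *m M *m ctr v) 0 0.

Lemma qfD n (M1 M2 : 'M[C]_n) v : qf (M1 + M2) v = qf M1 v + qf M2 v.
Proof. by rewrite /qf mulmxDr mulmxDl mxE. Qed.

Lemma qfB n (M1 M2 : 'M[C]_n) v : qf (M1 - M2) v = qf M1 v - qf M2 v.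
Proof. by rewrite qfD; congr (_ + _); rewrite /qf mulmxN mulNmx mxE. Qed.

Lemma psdD n (A B : 'M[C]_n) : psd A -> psd B -> psd (A + B).
Proof.
move=> [hA qA] [hB qB]; split; first by rewrite ctrD hA hB.
move=> v; have := qfD A B v; rewrite /qf => ->; exact: addr_ge0.
Qed.

Lemma psd_congr m n (D : 'M[C]_m) (X : 'M[C]_(m, n)) :
  psd D -> psd (ctr X *m D *m X).
Proof.
move=> [hD qD]; split; first by rewrite !ctr_mul ctrK hD mulmxA.
move=> v; have := qD (v *m ctr X).
by rewrite ctr_mul ctrK !mulmxA.
Qed.

Lemma pd_unit n (M : 'M[C]_n) :
  (forall v : 'rV[C]_n, v != 0 -> 0 < qf M v) -> M \in unitmx.
Proof.
move=> h; rewrite unitmxE unitfE; apply/negP => /det0P [v vn0 vM].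
by have := h v vn0; rewrite /qf vM mul0mx mxE ltxx.
Qed.


Lemma qf_diag n (d : 'rV[C]_n) u :
  qf (diag_mx d) u = \sum_j d 0 j * (u 0 j * (u 0 j)^*).
Proof.
rewrite /qf mul_mx_diag mxE; apply: eq_bigr => j _; rewrite !mxE.
by rewrite mulrAC mulrC.
Qed.

Lemma psd_diag n (d : 'rV[C]_n) : (forall j, 0 <= d 0 j) -> psd (diag_mx d).
Proof.
move=> hd; split.
  apply/matrixP => i j; rewrite !mxE; case: eqVneq => [->|_].
    by rewrite !mulr1n geC0_conj.
  by rewrite !mulr0n conjC0.
move=> v; change (0 <= qf (diag_mx d) v); rewrite qf_diag; apply: sumr_ge0 => j _.
by apply: mulr_ge0 => //; exact: mul_conjC_ge0.
Qed.

Lemma sqrt_exists n (Z : 'M[C]_n) : psd Z -> exists S : 'M[C]_n, psd S /\ S *m S = Z.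
Proof.
move=> [hZ qZ].
have Zn : Z \is normalmx by apply/normalmxP; change (Z *m ctr Z = ctr Z *m Z); rewrite hZ.
have := orthomx_spectralP Zn.
set P := spectralmx Z; set d := spectral_diag Z => ZE.
have Pu : P \is unitarymx := spectral_unitarymx Z.
have Pi : invmx P = ctr P by rewrite invmx_unitary.
have PP : P *m ctr P = 1%:M by apply/unitarymxP.
have PP' : ctr P *m P = 1%:M by rewrite -Pi mulVmx // unitarymx_unit.
rewrite Pi in ZE.
have qZd u : qf Z (u *m P) = qf (diag_mx d) u.
  rewrite /qf ZE ctr_mul !mulmxA -[u *m P *m ctr P]mulmxA PP mulmx1.
  by rewrite -[_ *m P *m ctr P]mulmxA PP mulmx1.
have dge0 j : 0 <= d 0 j.
  have : 0 <= qf Z (delta_mx 0 j *m P) := qZ _.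
  rewrite qZd qf_diag.
  rewrite (bigD1 j) //= big1 ?addr0; last first.
    move=> k kj; rewrite !mxE (negbTE kj) andbF; have -> : (false%:R : C) = 0 by []. by rewrite mul0r mulr0.
  rewrite [delta_mx _ _ _ _]mxE !eqxx /=. have -> : (true%:R : C) = 1 by []. by rewrite conjC1 !mulr1.
pose s := \row_j sqrtC (d 0 j).
exists (ctr P *m diag_mx s *m P); split.
  apply: psd_congr; apply: psd_diag => j; rewrite mxE sqrtC_ge0; exact: dge0.
rewrite ZE !mulmxA -[ctr P *m diag_mx s *m P *m ctr P]mulmxA PP mulmx1.
rewrite -[ctr P *m diag_mx s *m diag_mx s]mulmxA mulmx_diag; congr (_ *m _ *m _).
congr diag_mx; apply/rowP => j; rewrite !mxE -expr2; exact: sqrtCK.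
Qed.

Lemma psd_sqrt_spec n (Z : 'M[C]_n) :
  psd Z -> psd (psd_sqrt Z) /\ psd_sqrt Z *m psd_sqrt Z = Z.
Proof.
move=> hZ; rewrite /psd_sqrt; case: pselect => [h|nh].
  exact: (proj2_sig (cid h)).
by exfalso; apply: nh; exact: sqrt_exists.
Qed.


Lemma qf1 n (v : 'rV[C]_n) : qf 1%:M v = (v *m ctr v) 0 0.
Proof. by rewrite /qf mulmx1. Qed.

Lemma psd1 n : psd (1%:M : 'M[C]_n).
Proof. split; first exact: ctr1. by move=> v; rewrite mulmx1; exact: dot_ge0. Qed.

Lemma pd1 n (v : 'rV[C]_n) : v != 0 -> 0 < qf 1%:M v.
Proof.
move=> vn0; rewrite qf1 lt_def dot_ge0 andbT; apply/eqP => /dot_eq0 h.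
by rewrite h eqxx in vn0.
Qed.

Lemma pd_add_psd n (P Z : 'M[C]_n) :
  (forall v, v != 0 -> 0 < qf P v) -> psd Z -> forall v, v != 0 -> 0 < qf (P + Z) v.
Proof.
move=> hP [_ hZ] v vn0; rewrite qfD; apply: ltr_wpDr; first exact: hZ.
exact: hP.
Qed.

Lemma inv_antitone n (P Q : 'M[C]_n) :
  psd P -> P \in unitmx -> Q \in unitmx -> ctr Q = Q -> psd (Q - P) ->
  psd (invmx P - invmx Q).
Proof.
move=> hP uP uQ hQ hQP.
set iP := invmx P; set iQ := invmx Q.
have hiQ : ctr iQ = iQ by rewrite /iQ ctr_inv hQ.
have hiP : ctr iP = iP by rewrite /iP ctr_inv (proj1 hP).
have e1 : (iP - iQ) *m P *m (iP - iQ) = iP - iQ - iQ + iQ *m P *m iQ.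
  rewrite mulmxBl mulVmx // mulmxBl mul1mx !mulmxBr -!mulmxA mulmxV //.
  by rewrite mulmx1 opprB [iQ *m _ - iQ]addrC addrA.
have e2 : iQ *m (Q - P) *m iQ = iQ - iQ *m P *m iQ.
  by rewrite mulmxBr mulVmx // mulmxBl mul1mx.
have -> : iP - iQ = (iP - iQ) *m P *m (iP - iQ) + iQ *m (Q - P) *m iQ.
  by rewrite e1 e2 addrA [_ + iQ]addrAC addrK addrNK.
apply: psdD.
  have := psd_congr (iP - iQ) hP; by rewrite ctrB hiP hiQ.
have := psd_congr iQ hQP; by rewrite hiQ.
Qed.


Lemma rank_ctr m n (F : 'M[C]_(m, n)) : \rank (ctr F) = \rank F.
Proof. by rewrite /ctr mxrank_map mxrank_tr. Qed.

Section WithF.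
Variables (N K : nat) (F : 'M[C]_(N, K)).
Hypothesis hF : \rank F = K.

Let B := ctr F *m F.

Lemma B_herm : ctr B = B.
Proof. by rewrite /B ctr_mul ctrK. Qed.

Lemma B_psd : psd B.
Proof. have := psd_congr F (psd1 N); by rewrite mulmx1. Qed.

Lemma B_pd v : v != 0 -> 0 < qf B v.
Proof.
move=> vn0; set u := v *m ctr F.
have -> : qf B v = (u *m ctr u) 0 0 by rewrite /qf /u ctr_mul ctrK /B !mulmxA.
rewrite lt_def dot_ge0 andbT; apply/eqP => /dot_eq0 /eqP.
rewrite /u mulmx_free_eq0; first by rewrite (negbTE vn0).
by rewrite /row_free rank_ctr hF.
Qed.

Lemma B_unit : B \in unitmx.
Proof. exact: pd_unit B_pd. Qed.

Let A := invmx B.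

Lemma A_herm : ctr A = A.
Proof. by rewrite /A ctr_inv B_herm. Qed.

Lemma A_psd : psd A.
Proof.
have := psd_congr A B_psd; by rewrite A_herm -mulmxA mulmxV ?B_unit // mulmx1.
Qed.

Lemma key (Z S : 'M[C]_K) : psd Z -> psd S -> S *m S = Z ->
  A *m S *m invmx (1%:M + S *m A *m S) *m S *m A = A - invmx (B + Z).
Proof.
move=> hZ hS SS.
set T := 1%:M + S *m A *m S.
have uT : T \in unitmx.
  apply: pd_unit; apply: pd_add_psd; first exact: pd1.
  have := psd_congr S A_psd; by rewrite (proj1 hS).
have uP : (B + Z) \in unitmx by apply: pd_unit; apply: pd_add_psd; [exact: B_pd|].
have e1 : (B + Z) *m A *m S = S *m T.
  rewrite !mulmxDl mulmxV ?B_unit // mul1mx -SS /T mulmxDr mulmx1 !mulmxA.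
  by [].
have e2 : A *m S = invmx (B + Z) *m S *m T.
  by rewrite -mulmxA -e1 !mulmxA mulVmx // mul1mx.
rewrite e2 mulmxK // -[invmx (B + Z) *m S *m S]mulmxA SS.
have eZ : (B + Z) - B = Z by rewrite addrC addKr.
have e3 : invmx (B + Z) *m Z = 1%:M - invmx (B + Z) *m B.
  by rewrite -[in RHS](mulVmx uP) -mulmxBr eZ.
rewrite e3 mulmxBl mul1mx -mulmxA mulmxV ?B_unit // mulmx1.
done.
Qed.

Lemma h0E (G : 'M[C]_(N, K)) (Z : 'M[C]_K) : psd Z ->
  h0 F G Z = ctr G *m F *m (A - invmx (B + Z)) *m ctr F *m G
             + ctr G *m projF_perp F *m G.
Proof.
move=> hZ; have [hS SS] := psd_sqrt_spec hZ.
rewrite -(key hZ hS SS) !mulmxA /h0 /A /B. reflexivity.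
Qed.

Lemma BZ_unit (Z : 'M[C]_K) : psd Z -> (B + Z) \in unitmx.
Proof. by move=> hZ; apply: pd_unit; apply: pd_add_psd; [exact: B_pd|]. Qed.




Lemma subDD (V : zmodType) (x y w : V) : (x + w) - (y + w) = x - y.
Proof. by rewrite opprD addrACA subrr addr0. Qed.

Lemma subBB (V : zmodType) (a x y : V) : (a - x) - (a - y) = y - x.
Proof. by rewrite opprB addrC addrA addrNK. Qed.

Lemma lemma3_gen (G : 'M[C]_(N, K)) (Z Z' : 'M[C]_K) :
  psd Z -> psd Z' -> loewner_le Z Z' -> loewner_le (h0 F G Z) (h0 F G Z').
Proof.
move=> hZ hZ' hle; rewrite /loewner_le (h0E G hZ) (h0E G hZ') subDD.
rewrite -!mulmxBl -mulmxBr subBB.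
have hQP : psd ((B + Z') - (B + Z)) by rewrite -[B + Z']addrC -[B + Z]addrC subDD.
have hQ : ctr (B + Z') = B + Z' by rewrite ctrD B_herm (proj1 hZ').
have := inv_antitone (psdD B_psd hZ) (BZ_unit hZ) (BZ_unit hZ') hQ hQP.
move=> /(psd_congr (ctr F *m G)).
by rewrite ctr_mul ctrK !mulmxA.
Qed.

End WithF.

End Basics.

Theorem lemma3 (R : realType) (N K : nat) (hK : (0 < K)%N) (hKN : (K <= N)%N)
  (F G : 'M[R[i]]_(N, K)) (hF : \rank F = K) (Z Z' : 'M[R[i]]_K) :
  psd Z -> psd Z' -> loewner_le Z Z' -> loewner_le (h0 F G Z) (h0 F G Z').
Proof. exact: lemma3_gen. Qed.
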